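(* Let $L$ be a minimal shift with linear complexity, i.e. $p_L(n)=O(n)$. Then $SP_L$ is finite.
   Context: $A$ is a finite alphabet, and $\sigma$ deletes the first letter. A shift is a closed $L\subseteq A^{\mathbb N}$ with $\sigma(L)\subseteq L$. It is minimal if it contains no nonempty proper closed $\sigma$-invariant subset. $p_L(n)$ is the number of length-$n$ factors of words of $L$. A factor $u$ is left special if $bu$ is a factor for at least two letters $b\in A$. $SP_L$ is the set of infinite words all of whose prefixes are left special factors of $L$. *)

(* Defs.v *)
From Stdlib Require Import ClassicalEpsilon List.
From mathcomp Require Import all_boot.
Set Implicit Arguments. Unset Strict Implicit. Unset Printing Implicit Defensive.

Section Shifts.
Variable A : finType.

Definition word := nat -> A.

Definition shift (x : word) : word := fun n => x n.+1.

Definition prefix (n : nat) (x : word) : seq A := [seq x j | j <- iota 0 n].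

(* closed in the product topology of A^N (A discrete): x belongs to L as
   soon as every cylinder around x meets L *)
Definition closed (L : word -> Prop) : Prop :=
  forall x : word, (forall n, exists y, L y /\ prefix n y = prefix n x) -> L x.

Definition shift_invariant (L : word -> Prop) : Prop :=
  forall x, L x -> L (shift x).

Definition is_shift (L : word -> Prop) : Prop := closed L /\ shift_invariant L.

Definition minimal_shift (L : word -> Prop) : Prop :=
  is_shift L /\
  forall M : word -> Prop,
    (forall x, M x -> L x) -> closed M -> shift_invariant M ->
    (exists x, M x) -> forall x, L x -> M x.

Definition factor (L : word -> Prop) (u : seq A) : Prop :=
  exists x, L x /\ exists i, u = [seq x (i + j) | j <- iota 0 (size u)].

Definition pb (P : Prop) : bool :=
  if excluded_middle_informative P then true else false.

Definition complexity (L : word -> Prop) (n : nat) : nat :=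
  #|[set t : n.-tuple A | pb (factor L (tval t))]|.

Definition linear_complexity (L : word -> Prop) : Prop :=
  exists C N : nat, forall n, N <= n -> complexity L n <= C * n.

Definition left_special (L : word -> Prop) (u : seq A) : Prop :=
  factor L u /\ exists b1 b2 : A, b1 <> b2 /\ factor L (b1 :: u) /\ factor L (b2 :: u).

Definition SP (L : word -> Prop) (x : word) : Prop :=
  forall n, left_special L (prefix n x).

Definition finite_set (P : word -> Prop) : Prop :=
  exists s : list word, forall x, P x -> List.In x s.

End Shifts.

(* Main.v *)
Require Import Defs.
From mathcomp Require Import all_boot.
From Stdlib Require Import Classical ClassicalEpsilon FunctionalExtensionality.
From mathcomp Require Import zify.
Import Defs.

Set Implicit Arguments. Unset Strict Implicit. Unset Printing Implicit Defensive.

Lemma pbT (P : Prop) : P -> pb P = true.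
Proof. by rewrite /pb; case: excluded_middle_informative. Qed.

Lemma pbP (P : Prop) : pb P -> P.
Proof. by rewrite /pb; case: excluded_middle_informative. Qed.

Lemma size_prefix (A : finType) n (x : word A) : size (prefix n x) == n.
Proof. by rewrite /prefix size_map size_iota. Qed.

Definition ptuple (A : finType) n (x : word A) : n.-tuple A :=
  @Tuple n A (prefix n x) (size_prefix n x).

Lemma nth_prefix (A : finType) (d : A) n (x : word A) m :
  m < n -> nth d (prefix n x) m = x m.
Proof. by move=> lt; rewrite /prefix (nth_map 0) ?size_iota // nth_iota. Qed.

Lemma inv_iter (A : finType) (L : word A -> Prop) (x : word A) i :
  shift_invariant L -> L x -> L (fun t => x (i + t)).
Proof.
move=> inv Lx; elim: i => [|i IH]; first exact: Lx.
have -> : (fun t => x (i.+1 + t)) = shift (fun t => x (i + t)).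
  by apply: functional_extensionality => t; rewrite /shift addSnnS.
exact: inv.
Qed.

Lemma left_ext (A : finType) (L : word A -> Prop) (u : seq A) :
  minimal_shift L -> factor L u -> exists b, factor L (b :: u).
Proof.
move=> [[clL invL] minL] [x [Lx [i Hu]]].
pose M := fun z : word A => L z /\ forall n, exists y j,
   L y /\ prefix n z = prefix n (fun t => y (j.+1 + t)).
have MLsub : forall z, M z -> L z by move=> z [].
have clM : closed M.
  move=> z Hz; split.
    apply: clL => n; have [y [[Ly _] E]] := Hz n; by exists y.
  move=> n; have [y [[_ Hy] E]] := Hz n; have [w [j [Lw E2]]] := Hy n.
  by exists w, j; split => //; rewrite -E.
have invM : shift_invariant M.
  move=> z [Lz _]; split; first exact: invL.
  by move=> n; exists z, 0; split.
have neM : exists z, M z.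
  exists (shift x); split; first exact: invL.
  by move=> n; exists x, 0; split.
have Mall := minL M MLsub clM invM neM.
have Lz := inv_iter i invL Lx.
have [_ Hz] := Mall _ Lz.
have [y [j [Ly E]]] := Hz (size u).
have Hu' : u = prefix (size u) (fun t => y (j.+1 + t)) by rewrite -E.
exists (y j), y; split => //; exists j.
rewrite /= addn0; congr (_ :: _).
rewrite {1}Hu' /prefix -(addn0 1) iotaDl -map_comp; apply: eq_map => t /=.
by rewrite addnA addn1.
Qed.

Definition Fset (A : finType) (L : word A -> Prop) n :=
  [set t : n.-tuple A | pb (factor L (tval t))].

Lemma count_step (A : finType) (L : word A -> Prop) (a0 : A) n
  (S : {set n.-tuple A}) :
  (forall u, factor L u -> exists b, factor L (b :: u)) ->
  (forall t, t \in S -> left_special L (tval t)) ->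
  #|Fset L n| + #|S| <= #|Fset L n.+1|.
Proof.
move=> ext HS.
pose c1 (u : n.-tuple A) := odflt a0 [pick a | pb (factor L (a :: tval u))].
pose c2 (u : n.-tuple A) :=
  odflt a0 [pick a | pb (factor L (a :: tval u)) && (a != c1 u)].
pose e1 (u : n.-tuple A) := [tuple of c1 u :: u].
pose e2 (u : n.-tuple A) := [tuple of c2 u :: u].
have inj1 : injective e1 by move=> u v /(congr1 val) [] _ /val_inj.
have inj2 : injective e2 by move=> u v /(congr1 val) [] _ /val_inj.
have c1P : forall u, u \in Fset L n -> factor L (c1 u :: tval u).
  move=> u; rewrite inE => /pbP /ext [b Hb]; rewrite /c1.
  case: pickP => [a /pbP //|H].
  by have := H b; rewrite /= (pbT Hb).
have c2P : forall u, u \in S -> c2 u != c1 u /\ factor L (c2 u :: tval u).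
  move=> u /HS [_ [b1 [b2 [ne [H1 H2]]]]]; rewrite /c2.
  case: pickP => [a /andP [/pbP Ha na] | H]; first by [].
  have [E|ne1] := eqVneq b1 (c1 u).
    have ne2 : b2 != c1 u.
      by rewrite -E; apply/eqP => E'; apply: ne; rewrite E'.
    by have := H b2; rewrite /= (pbT H2) ne2.
  by have := H b1; rewrite /= (pbT H1) ne1.
pose T1 := e1 @: Fset L n.
pose T2 := e2 @: S.
have cT1 : #|T1| = #|Fset L n| by rewrite card_imset.
have cT2 : #|T2| = #|S| by rewrite card_imset.
have dis : T1 :&: T2 = set0.
  apply/setP => t; rewrite !inE; apply/negP => /andP [/imsetP [u Hu ->]].
  move=> /imsetP [v Hv /(congr1 val) /= [E1 /val_inj E2]].
  subst v; have [ne _] := c2P u Hv.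
  by rewrite E1 eqxx in ne.
have sub : T1 :|: T2 \subset Fset L n.+1.
  apply/subsetP => t /setUP [] /imsetP [u Hu ->]; rewrite inE; apply: pbT.
    exact: c1P.
  by have [_ ?] := c2P u Hu.
have := subset_leq_card sub.
have := cardsUI T1 T2; rewrite dis cards0 addn0 cT1 cT2 => ->.
done.
Qed.

Lemma bound1 (P : nat -> nat -> Prop) k :
  (forall i, i < k -> exists m, P i m) ->
  exists B, forall i, i < k -> exists2 m, m < B & P i m.
Proof.
elim: k => [|k IH] H; first by exists 0.
have [B HB] := IH (fun i lt => H i (leqW lt)).
have [mk Hk] := H k (ltnSn k).
exists (maxn B mk.+1) => i; rewrite ltnS leq_eqVlt => /orP [/eqP -> | lt].
  by exists mk => //; lia.
have [m lt' Hm] := HB i lt; exists m => //; lia.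
Qed.

Lemma bound2 (R : nat -> nat -> nat -> Prop) k :
  (forall i j, i < k -> j < k -> exists m, R i j m) ->
  exists B, forall i j, i < k -> j < k -> exists2 m, m < B & R i j m.
Proof.
move=> H.
have : forall i, i < k -> exists B, forall j, j < k -> exists2 m, m < B & R i j m.
  by move=> i ik; apply: bound1 => j jk; exact: H.
move/bound1 => [B HB]; exists B => i j ik jk.
have [Bi lt HBi] := HB i ik; have [m lm Rm] := HBi j jk.
by exists m => //; lia.
Qed.

Theorem mainTheorem14 (A : finType) (L : word A -> Prop) :
  minimal_shift L -> linear_complexity L -> finite_set (SP L).
Proof.
move=> Hmin [C [N HC]].
have ext := fun u => @left_ext A L u Hmin.
apply: NNPP => Hnf.
have [x0 _] : exists x, SP L x.
  apply: NNPP => H; apply: Hnf; exists nil => x Sx; exfalso; apply: H; by exists x.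
have distinct : forall k, exists g : nat -> word A,
    (forall i, i < k -> SP L (g i)) /\
    (forall i j, i < k -> j < k -> g i = g j -> i = j).
  elim=> [|k [g [Hg Hd]]]; first by exists (fun _ => x0).
  have [x [Sx nIn]] : exists x, SP L x /\ ~ List.In x (List.map g (List.seq 0 k)).
    apply: NNPP => H; apply: Hnf; exists (List.map g (List.seq 0 k)) => x Sx.
    apply: NNPP => nI; apply: H; by exists x.
  exists (fun i => if i == k then x else g i); split.
    move=> i; rewrite ltnS leq_eqVlt => /orP [/eqP ->|lt]; first by rewrite eqxx.
    by rewrite (ltn_eqF lt) /=; exact: Hg.
  have inl : forall j, j < k -> x <> g j.
    move=> j jk E; apply: nIn; rewrite E; apply: List.in_map.
    apply/List.in_seq; lia.
  move=> i j; rewrite !ltnS.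
  case: (eqVneq i k) => [->|ik]; case: (eqVneq j k) => [->|jk] //.
  - move=> _ jk' E; exfalso; apply: (inl j) => //; lia.
  - move=> ik' _ E; exfalso; apply: (inl i) => //; lia.
  - move=> ik' jk'; apply: Hd; lia.
have [g [Hg Hd]] := distinct C.+1.
set k := C.+1 in Hg Hd.
have a0 : A := x0 0.
have [B HB] : exists B, forall i j, i < k -> j < k ->
    exists2 m, m < B & (i = j \/ g i m <> g j m).
  apply: bound2 => i j ik jk.
  case: (eqVneq i j) => [->|ne]; first by exists 0; left.
  apply: NNPP => H; move/eqP: ne; apply; apply: Hd => //.
  apply: functional_extensionality => m; apply: NNPP => nm; apply: H.
  by exists m; right.
have step : forall n, B <= n -> complexity L n + k <= complexity L n.+1.
  move=> n Bn.
  pose S := [set ptuple n (g (val i)) | i : 'I_k].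
  have cS : #|S| = k.
    rewrite card_imset ?cardsT ?card_ord //.
    move=> i j E; apply: val_inj.
    have E' : prefix n (g (val i)) = prefix n (g (val j)) := congr1 val E.
    have [m lt [//|ne]] := HB (val i) (val j) (ltn_ord i) (ltn_ord j).
    exfalso; apply: ne.
    have := congr1 (fun s => nth a0 s m) E'.
    by rewrite /= !nth_prefix //; lia.
  have HS : forall t, t \in S -> left_special L (tval t).
    by move=> t /imsetP [i _ ->]; exact: (Hg _ (ltn_ord i) n).
  have := count_step a0 ext HS; rewrite cS; done.
have growth : forall m, k * m <= complexity L (B + m).
  elim=> [|m IH]; first by rewrite muln0.
  have := step (B + m) (leq_addr _ _); rewrite addnS; lia.
pose m := C * B + N + 1.
have h1 := growth m.
have h2 := HC (B + m) ltac:(rewrite /m; lia).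
rewrite /k /m in h1 h2; nia.
Qed.
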